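(* Let $(X,d)$ be a compact metric space and $\mathcal{W}$ a uniformly bounded open cover of $X$. Then $\mathrm{Viet}^{\mathrm{m}}(\mathcal{W})$ is strictly strongly locally contractible.
   Context: A cover $\mathcal{W}$ is uniformly bounded if there is $D>0$ with $\mathrm{diam}(W)<D$ for all $W\in\mathcal{W}$. $\mathrm{Viet}^{\mathrm{m}}(\mathcal{W})$ is the set of finitely supported probability measures on $X$ whose support is contained in some element of $\mathcal{W}$, with the $1$-Wasserstein (optimal transport) metric. A space $Y$ is strictly strongly locally contractible if every point $y\in Y$ has a local base of neighborhoods each of which strongly deformation retracts onto $y$, i.e. deformation retracts onto $\{y\}$ via a homotopy fixing $y$ throughout. *)

(* Defs.v *)
From HB Require Import structures.
From mathcomp Require Import all_boot all_order all_algebra.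
From mathcomp Require Import boolp classical_sets functions cardinality fsbigop reals ereal.
Set Implicit Arguments. Unset Strict Implicit. Unset Printing Implicit Defensive.
Import Order.TTheory GRing.Theory Num.Theory.
Local Open Scope classical_set_scope.
Local Open Scope ring_scope.

Section MetricDefs.
Variables (R : realType) (X : choiceType) (d : X -> X -> R).

Definition is_metric : Prop :=
  [/\ (forall x y, 0 <= d x y), (forall x y, d x y = 0 <-> x = y),
      (forall x y, d x y = d y x) & (forall x y z, d x z <= d x y + d y z)].

Definition mball (x : X) (r : R) : set X := [set y | d x y < r].

Definition mopen (U : set X) : Prop :=
  forall x, U x -> exists2 r : R, 0 < r & mball x r `<=` U.

Definition mcompact : Prop :=
  forall C : set (set X), (forall U, C U -> mopen U) ->
    (forall x, exists U, C U /\ U x) ->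
    exists F : set (set X), [/\ F `<=` C, finite_set F &
                                forall x, exists U, F U /\ U x].

Definition diam (A : set X) : \bar R :=
  ereal_sup [set z | exists x y, [/\ A x, A y & z = (d x y)%:E]].

Definition unif_bounded (W : set (set X)) : Prop :=
  exists D : R, 0 < D /\ forall A, W A -> (diam A < D%:E)%E.

End MetricDefs.

Section Measures.
Variable (R : realType).

Definition supp (T : choiceType) (f : T -> R) : set T := [set x | f x != 0].

(* finitely supported probability measures, as weight functions *)
Definition fsprob (T : choiceType) (mu : T -> R) : Prop :=
  [/\ (forall x, 0 <= mu x), finite_set (supp mu) &
      \sum_(x \in supp mu) mu x = 1].

Variables (X : choiceType) (d : X -> X -> R).

Definition coupling (mu nu : X -> R) (pi : X * X -> R) : Prop :=
  [/\ (forall p, 0 <= pi p), finite_set (supp pi),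
      (forall x, \sum_(y \in supp (fun y => pi (x, y))) pi (x, y) = mu x) &
      (forall y, \sum_(x \in supp (fun x => pi (x, y))) pi (x, y) = nu y)].

Definition cost (pi : X * X -> R) : R :=
  \sum_(p \in supp pi) pi p * d p.1 p.2.

Definition W1 (mu nu : X -> R) : R :=
  inf [set c | exists pi, coupling mu nu pi /\ c = cost pi].

Definition VietM (W : set (set X)) : set (X -> R) :=
  [set mu | fsprob mu /\ exists A, W A /\ supp mu `<=` A].

End Measures.

Section LocalContractibility.
Variables (R : realType) (T : Type) (Y : set T) (rho : T -> T -> R).

Definition nbhd_in (y : T) (U : set T) : Prop :=
  [/\ U `<=` Y, U y &
      exists2 r : R, 0 < r & forall v, Y v -> rho y v < r -> U v].

Definition sdr_onto_point (U : set T) (y : T) : Prop :=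
  exists H : R -> T -> T,
    [/\ (forall t u, 0 <= t <= 1 -> U u -> U (H t u)),
        (forall u, U u -> H 0 u = u),
        (forall u, U u -> H 1 u = y),
        (forall t, 0 <= t <= 1 -> H t y = y) &
        (forall t u, 0 <= t <= 1 -> U u ->
           forall e : R, 0 < e -> exists2 delta : R, 0 < delta &
             forall s v, 0 <= s <= 1 -> U v -> `|s - t| < delta ->
               rho u v < delta -> rho (H t u) (H s v) < e)].

Definition strictly_strongly_locally_contractible : Prop :=
  forall y, Y y -> forall N, nbhd_in y N ->
    exists U, [/\ nbhd_in y U, U `<=` N & sdr_onto_point U y].

End LocalContractibility.

(* Main.v *)
Require Import Defs.
From HB Require Import structures.
From mathcomp Require Import all_boot all_order all_algebra.
From mathcomp Require Import boolp classical_sets functions cardinality fsbigop reals ereal.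
From mathcomp Require Import ring lra.
Set Implicit Arguments. Unset Strict Implicit. Unset Printing Implicit Defensive.
Import Order.TTheory GRing.Theory Num.Theory.
Local Open Scope classical_set_scope.
Local Open Scope ring_scope.

Section Sums.
Variables (R : realType) (T : choiceType).

Lemma fsT_seq (f : T -> R) (s : seq T) : uniq s ->
  (forall x, f x != 0 -> x \in s) ->
  \sum_(x \in [set: T]) f x = \sum_(x <- s) f x.
Proof.
move=> us hs; rewrite (fsbigE s) //.
- by apply: eq_bigl => i; rewrite in_setT.
- move=> i _ nis; apply/eqP; apply: contraNT nis; exact: hs.
Qed.

Lemma fsupp_T (f : T -> R) :
  \sum_(x \in supp f) f x = \sum_(x \in [set: T]) f x.
Proof.
apply: fsbig_widen => // x [_ /=]; rewrite /supp /= => /negP; rewrite negbK.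
by move/eqP.
Qed.

Lemma fin_seq (A : set T) : finite_set A ->
  exists s : seq T, uniq s /\ forall x, A x -> x \in s.
Proof.
move=> /finite_seqP [s ->]; exists (undup s); split; first exact: undup_uniq.
by move=> x /= xs; rewrite mem_undup.
Qed.

End Sums.

Section W1sec.
Variables (R : realType) (X : choiceType) (d : X -> X -> R).
Variable hd : is_metric d.

Definition scoup (s : seq X) (u v : X -> R) (pi : X * X -> R) :=
 [/\ uniq s, (forall p, 0 <= pi p),
     (forall x x', pi (x, x') != 0 -> (x \in s) && (x' \in s)),
     (forall x, \sum_(x' <- s) pi (x, x') = u x) &
     (forall x', \sum_(x <- s) pi (x, x') = v x')].

Definition scost (s : seq X) (pi : X * X -> R) :=
  \sum_(x <- s) \sum_(x' <- s) pi (x, x') * d x x'.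

Lemma d_ge0 x y : 0 <= d x y.
Proof. by case: hd. Qed.

Lemma cost_seq s pi : uniq s ->
  (forall x x', pi (x, x') != 0 -> (x \in s) && (x' \in s)) ->
  cost d pi = scost s pi.
Proof.
move=> us hs; rewrite /cost.
rewrite (fsbig_widen _ [set: X * X]) //; last first.
  move=> p [_ /=]; rewrite /supp /= => /negP; rewrite negbK => /eqP ->.
  by rewrite mul0r.
rewrite (@fsT_seq _ _ _ [seq (x, y) | x <- s, y <- s]).
- by rewrite big_allpairs.
- by apply: allpairs_uniq => // -[a b] [a' b'] _ _.
- move=> [x x'] /=; rewrite mulf_eq0 negb_or => /andP[h _].
  by have /andP[h1 h2] := hs _ _ h; apply/allpairsP; exists (x, x').
Qed.

Lemma scoup_coupling s u v pi : scoup s u v pi -> coupling u v pi.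
Proof.
case=> us p0 hs hr hc; split => //.
- apply: (@sub_finite_set _ _ [set` [seq (x, y) | x <- s, y <- s]]);
    last exact: finite_seq.
  move=> [x x'] /= h; have /andP[h1 h2] := hs _ _ h.
  by apply/allpairsP; exists (x, x').
- move=> x; rewrite fsupp_T (fsT_seq us) //.
  by move=> x' h; have /andP[] := hs _ _ h.
- move=> x'; rewrite fsupp_T (fsT_seq us) //.
  by move=> x h; have /andP[] := hs _ _ h.
Qed.

Lemma cost_ge0 pi : (forall p, 0 <= pi p) -> 0 <= cost d pi.
Proof. by move=> h; apply: fsumr_ge0 => p _; apply: mulr_ge0 => //; apply: d_ge0. Qed.

Lemma W1_le s u v pi : scoup s u v pi -> W1 d u v <= scost s pi.
Proof.
move=> h; have [us _ hs _ _] := h.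
rewrite -(cost_seq us hs) /W1.
apply: ge_inf; last by exists pi; split => //; exact: scoup_coupling h.
exists 0 => c [pi' [[p0 _ _ _] ->]]; exact: cost_ge0.
Qed.

Lemma fsprob_seq (u : X -> R) s : fsprob u -> uniq s -> (forall x, u x != 0 -> x \in s) ->
  \sum_(x <- s) u x = 1.
Proof. by case=> _ _ h us hs; rewrite -(fsT_seq us hs) -fsupp_T. Qed.

Lemma prod_coupling (u v : X -> R) : fsprob u -> fsprob v ->
  coupling u v (fun p => u p.1 * v p.2).
Proof.
move=> hu hv; have [u0 fu _] := hu; have [v0 fv _] := hv.
have fuv : finite_set (supp u `|` supp v) by rewrite finite_setU.
have [s [us hs]] := fin_seq fuv.
apply: (@scoup_coupling s); split => //.
- by move=> p; apply: mulr_ge0.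
- move=> x x' /=; rewrite mulf_eq0 negb_or => /andP[h1 h2].
  by rewrite !hs //; [right | left].
- move=> x /=; rewrite -mulr_sumr (fsprob_seq hv us) ?mulr1 //.
  by move=> x' h; apply: hs; right.
- move=> x' /=; rewrite -mulr_suml (fsprob_seq hu us) ?mul1r //.
  by move=> x h; apply: hs; left.
Qed.

Lemma W1_lt (u v : X -> R) e : fsprob u -> fsprob v -> W1 d u v < e ->
  exists pi, coupling u v pi /\ cost d pi < e.
Proof.
move=> hu hv /inf_lt [].
  by exists (cost d (fun p => u p.1 * v p.2)); exists (fun p => u p.1 * v p.2); split => //;
    exact: prod_coupling.
by move=> c [pi [cp ->]] lt; exists pi.
Qed.


Lemma ler_sum_seq (I : eqType) (r : seq I) (F G : I -> R) :
  (forall i, i \in r -> F i <= G i) -> \sum_(i <- r) F i <= \sum_(i <- r) G i.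
Proof. by move=> h; rewrite big_seq [X in _ <= X]big_seq; apply: ler_sum. Qed.

Lemma sumr_ge0_seq (I : eqType) (r : seq I) (F : I -> R) :
  (forall i, i \in r -> 0 <= F i) -> 0 <= \sum_(i <- r) F i.
Proof. by move=> h; rewrite big_seq; apply: sumr_ge0. Qed.

Lemma sumr_eq0_seq (I : eqType) (r : seq I) (F : I -> R) :
  (forall i, i \in r -> 0 <= F i) -> \sum_(i <- r) F i = 0 ->
  forall i, i \in r -> F i = 0.
Proof.
move=> h0 /eqP; rewrite big_seq psumr_eq0 // => /allP h i ir.
by have /implyP/(_ ir)/eqP := h i ir.
Qed.

Lemma PT s (P Q : X -> R) (g : X * X -> R) M : uniq s -> fsprob P -> fsprob Q ->
  (forall x, P x != 0 -> x \in s) -> (forall x, Q x != 0 -> x \in s) ->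
  (forall p, 0 <= g p) ->
  (forall x, x \in s -> \sum_(x' <- s) g (x, x') <= P x) ->
  (forall x', x' \in s -> \sum_(x <- s) g (x, x') <= Q x') ->
  (forall x x', d x x' <= M) ->
  W1 d P Q <= scost s g + (1 - \sum_(x <- s) \sum_(x' <- s) g (x, x')) * M.
Proof.
move=> us hP hQ sP sQ g0 gr gc dM.
set m := \sum_(x <- s) \sum_(x' <- s) g (x, x').
pose r x := P x - \sum_(x' <- s) g (x, x').
pose c x' := Q x' - \sum_(x <- s) g (x, x').
have Sr : \sum_(x <- s) r x = 1 - m by rewrite sumrB (fsprob_seq hP).
have Sc : \sum_(x' <- s) c x' = 1 - m.
  by rewrite sumrB (fsprob_seq hQ) // /m exchange_big.
have r0 x : x \in s -> 0 <= r x by move=> xs; rewrite subr_ge0 gr.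
have c0 x : x \in s -> 0 <= c x by move=> xs; rewrite subr_ge0 gc.
have m1 : 0 <= 1 - m by rewrite -Sr; apply: sumr_ge0_seq.
set k := (1 - m)^-1.
have k0 : 0 <= k by rewrite invr_ge0.
pose pi (p : X * X) := if (p.1 \in s) && (p.2 \in s) then g p + r p.1 * c p.2 * k else 0.
have piE x x' : x \in s -> x' \in s -> pi (x, x') = g (x, x') + r x * c x' * k.
  by move=> xs x's; rewrite /pi /= xs x's.
have key : forall x, x \in s -> r x * ((1 - m) * k) = r x.
  move=> x xs; have [e|nz] := eqVneq (1 - m) 0.
    rewrite e mul0r mulr0; apply/esym; apply: (sumr_eq0_seq r0 _ xs); by rewrite Sr.
  by rewrite /k mulfV ?mulr1.
have key2 : forall x', x' \in s -> c x' * ((1 - m) * k) = c x'.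
  move=> x xs; have [e|nz] := eqVneq (1 - m) 0.
    rewrite e mul0r mulr0; apply/esym; apply: (sumr_eq0_seq c0 _ xs); by rewrite Sc.
  by rewrite /k mulfV ?mulr1.
have hs : scoup s P Q pi.
  split => //.
  - move=> [x x']; rewrite /pi /=; case: ifP => [/andP[xs x's]|_] //.
    by rewrite addr_ge0 // mulr_ge0 // mulr_ge0 // ?r0 ?c0.
  - by move=> x x'; rewrite /pi /=; case: ifP => // _; rewrite eqxx.
  - move=> x; case xs : (x \in s).
      rewrite (eq_big_seq (fun x' => g (x, x') + r x * c x' * k)); last first.
        by move=> x' x's; rewrite piE.
      rewrite big_split /= -mulr_suml -mulr_sumr Sc -mulrA.
      by rewrite key // /r addrC subrK.
    rewrite big1; last by move=> x' _; rewrite /pi /= xs.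
    by apply/esym/eqP; apply: contraFT xs; apply: sP.
  - move=> x'; case xs : (x' \in s).
      rewrite (eq_big_seq (fun x => g (x, x') + r x * c x' * k)); last first.
        by move=> x x's; rewrite piE.
      rewrite big_split /= -!mulr_suml Sr (mulrC (1 - m)) -mulrA key2 //.
      by rewrite /c addrC subrK.
    rewrite big1; last by move=> x _; rewrite /pi /= xs andbF.
    by apply/esym/eqP; apply: contraFT xs; apply: sQ.
apply: (le_trans (W1_le hs)).
rewrite /scost.
apply: (@le_trans _ _ (\sum_(x <- s) \sum_(x' <- s)
   (g (x, x') * d x x' + r x * (c x' * (k * M))))).
  apply: ler_sum_seq => x xs; apply: ler_sum_seq => x' x's.
  rewrite piE // mulrDl lerD2l -!mulrA; apply: ler_wpM2l; first exact: r0.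
  apply: ler_wpM2l; first exact: c0.
  by apply: ler_wpM2l.
rewrite (eq_bigr (fun x => \sum_(x' <- s) g (x, x') * d x x' +
    r x * (\sum_(x' <- s) c x' * (k * M)))); last first.
  by move=> x _; rewrite big_split /= mulr_sumr.
rewrite big_split /= -mulr_suml -mulr_suml Sr Sc lerD2l.
rewrite mulrA mulrA /k.
have [->|nz] := eqVneq (1 - m) 0; first by rewrite !mul0r.
by rewrite mulfK.
Qed.

End W1sec.

Ltac casemin := repeat match goal with
  |- context [if (?a <= ?b)%O then _ else _] => case: (leP a b) => ? end.

Section Geo.
Variables (R : realType) (X : choiceType) (d : X -> X -> R).
Variable hd : is_metric d.

Lemma d0 x y : 0 <= d x y. Proof. by case: hd. Qed.
Lemma dxx x : d x x = 0. Proof. by case: hd => _ h _ _; apply/h. Qed.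
Lemma dC x y : d x y = d y x. Proof. by case: hd. Qed.
Lemma dtri x y z : d x z <= d x y + d y z. Proof. by case: hd. Qed.

Lemma mball_open x r : mopen d (mball d x r).
Proof.
move=> z; rewrite /mball /= => hz; exists (r - d x z); first by rewrite subr_gt0.
move=> w; rewrite /mball /= => hw.
by apply: (le_lt_trans (dtri x z w)); rewrite -ltrBrDl.
Qed.

Lemma bound_d : mcompact d -> exists M, forall x y, d x y <= M.
Proof.
move=> hc; case: (pselect (exists x : X, True)) => [[x0 _]|nX]; last first.
  by exists 0 => x; exfalso; apply: nX; exists x.
have [F [FC fF cov]] : exists F : set (set X),
    [/\ F `<=` [set U | exists x, U = mball d x 1], finite_set F &
      forall x, exists U, F U /\ U x].
  apply: hc.
  - by move=> U [x ->]; apply: mball_open.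
  - move=> x; exists (mball d x 1); split; first by exists x.
    by rewrite /mball /= dxx ltr01.
have [sF eF] := (finite_seqP F).1 fF.
have : exists M, forall U, U \in sF -> forall z, U z -> d x0 z <= M.
  have : forall U, U \in sF -> exists x, U = mball d x 1.
    by move=> U Us; apply: FC; rewrite eF.
  elim: sF {eF} => [|U l IH] hl.
    by exists 0 => U; rewrite in_nil.
  have [M hM] := IH (fun V Vl => hl V (mem_behead (s := U :: l) Vl)).
  have [c ->] := hl U (mem_head _ _).
  exists (Num.max (d x0 c + 1) M) => V; rewrite in_cons => /orP[/eqP ->|Vl] z hz.
    rewrite le_max; apply/orP; left.
    by apply: (le_trans (dtri x0 c z)); rewrite lerD2l; apply/ltW.
  by rewrite le_max; apply/orP; right; apply: hM Vl z hz.
move=> [M hM]; exists (M + M) => x y.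
have [U [FU Ux]] := cov x; have [V [FV Vy]] := cov y.
apply: (le_trans (dtri x x0 y)); rewrite dC; apply: lerD.
  by apply: (hM U) => //; move: FU; rewrite eF.
by apply: (hM V) => //; move: FV; rewrite eF.
Qed.


Lemma radius (A0 : set X) (l : seq X) : mopen d A0 -> (forall c, c \in l -> A0 c) ->
  exists2 r : R, 0 < r & forall c, c \in l -> mball d c r `<=` A0.
Proof.
move=> oA; elim: l => [|c l IH] hl.
  by exists 1 => //; rewrite ltr01.
have [r r0 hr] := IH (fun c' h => hl c' (mem_behead (s := c :: l) h)).
have [r' r'0 hr'] := oA c (hl c (mem_head _ _)).
exists (Num.min r r'); first by rewrite lt_min r0 r'0.
move=> c'; rewrite in_cons => /orP[/eqP ->|c'l] z; rewrite /mball /= lt_min => /andP[h1 h2].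
  by apply: hr'.
by apply: (hr c' c'l).
Qed.

Definition distc (l : seq X) (b : R) (x : X) :=
  foldr (fun c acc => Num.min (d x c) acc) b l.

Lemma distc_le l b x c : c \in l -> distc l b x <= d x c.
Proof.
elim: l => [|c' l IH] //; rewrite in_cons /= => /orP[/eqP ->|cl].
  by rewrite ge_min lexx.
by rewrite ge_min IH // orbT.
Qed.

Lemma distc_lt l b x t : distc l b x < t -> t <= b -> exists2 c, c \in l & d x c < t.
Proof.
elim: l => [|c l IH] /=; first by move=> h1 h2; exfalso; move: (lt_le_trans h1 h2); rewrite ltxx.
rewrite gt_min => /orP[h|h] tb; first by exists c => //; rewrite mem_head.
by have [c' c'l hc'] := IH h tb; exists c' => //; rewrite in_cons c'l orbT.
Qed.

Lemma distc_lip l b x x' : distc l b x <= distc l b x' + d x x'.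
Proof.
elim: l => [|c l IH] /=; first by rewrite lerDl d0.
set A := distc l b x in IH *; set A' := distc l b x' in IH *.
have h1 : d x c <= d x' c + d x x' by rewrite addrC dtri.
rewrite !minEle; casemin; lra.
Qed.

Definition clamp (t : R) := Num.min 1 (Num.max 0 t).

Lemma clamp_cases t : [\/ t <= 0 /\ clamp t = 0, 1 <= t /\ clamp t = 1 |
   (0 <= t <= 1) /\ clamp t = t].
Proof.
rewrite /clamp; case: (leP t 0) => h.
  by apply: Or31; split => //; rewrite ?(max_l h) min_r // ler01.
case: (leP 1 t) => h'.
  by apply: Or32; split => //; rewrite ?(max_r (ltW h)) ?min_l.
apply: Or33; split; first by rewrite (ltW h) (ltW h').
by rewrite ?(max_r (ltW h)) ?min_r // ltW.
Qed.

Lemma phi_exists (S A0 : set X) : finite_set S -> mopen d A0 -> S `<=` A0 ->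
  exists phi : X -> R, exists rho : R, 0 < rho /\ [/\
    (forall x, 0 <= phi x <= 1),
    (forall x x', `|phi x - phi x'| <= d x x' / rho),
    (forall c, S c -> phi c = 0),
    (forall x c, phi x != 0 -> S c -> rho <= d c x) &
    (forall x, phi x < 1 -> A0 x)].
Proof.
move=> fS oA SA; have [l eS] := (finite_seqP S).1 fS.
have [r r0 hr] : exists2 r : R, 0 < r & forall c, c \in l -> mball d c r `<=` A0.
  by apply: radius => // c cl; apply: SA; rewrite eS.
pose rho := r / 2.
have rho0 : 0 < rho by rewrite divr_gt0.
pose t x := distc l r x / rho - 1.
pose phi x := clamp (t x).
have tlip x x' : t x - t x' <= d x x' / rho.
  rewrite /t opprB addrA subrK -mulrBl ler_pM2r ?invr_gt0 //.
  by rewrite lerBlDr addrC distc_lip.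
exists phi, rho; split => //; split.
- move=> x; rewrite /phi; case: (clamp_cases (t x)) => -[h ->]; lra.
- move=> x x'; have h1 := tlip x x'; have h2 := tlip x' x.
  rewrite dC in h2; rewrite ler_norml /phi.
  by case: (clamp_cases (t x)) => -[h ->]; case: (clamp_cases (t x')) => -[h' ->];
    apply/andP; split; lra.
- move=> c Sc; have : distc l r c <= 0 by rewrite -(dxx c) distc_le //; move: Sc; rewrite eS.
  rewrite /phi /t => h.
  have : distc l r c / rho <= 0 by rewrite ler_pdivrMr // mul0r.
  by move=> h'; case: (clamp_cases (distc l r c / rho - 1)) => -[h2 ->] //; lra.
- move=> x c; rewrite /phi => hx Sc; rewrite dC.
  apply: (le_trans _ (@distc_le l r x c _)); last by move: Sc; rewrite eS.
  have : 0 < t x.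
    by move: hx; case: (clamp_cases (t x)) => -[h ->] //; rewrite ?eqxx //; lra.
  rewrite /t subr_gt0 ltr_pdivlMr // mul1r => h; exact: ltW.
- move=> x; rewrite /phi => hx.
  have : t x < 1 by move: hx; case: (clamp_cases (t x)) => -[h ->]; lra.
  rewrite /t ltrBlDr ltr_pdivrMr // => h.
  have h2 : distc l r x < r by move: h; rewrite /rho; lra.
  have [c cl hc] := distc_lt h2 (lexx r).
  apply: (hr c cl); rewrite /mball /= dC.
  by move: hc; rewrite /rho; lra.
Qed.

End Geo.

Lemma sum_delta (R : realType) (X : choiceType) (s : seq X) x (c : R) :
  uniq s -> x \in s -> \sum_(x' <- s) (if x == x' then c else 0) = c.
Proof.
move=> us xs; rewrite (bigD1_seq x) //= eqxx big1_seq ?addr0 //.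
by move=> i /andP[/negbTE h _]; rewrite eq_sym h.
Qed.

Lemma min_ge (R : realType) (a b : R) : a - `|a - b| <= Num.min a b.
Proof.
case: (leP a b) => h; first by rewrite lerBlDr lerDl normr_ge0.
by rewrite lerBlDr addrC -lerBlDr ler_norm.
Qed.

Section Main.
Variables (R : realType) (X : choiceType) (d : X -> X -> R).
Variable hd : is_metric d.
Variables (y : X -> R) (phi : X -> R) (rho M : R).
Variable hy : fsprob y.
Variable rho0 : 0 < rho.
Variable phi01 : forall x, 0 <= phi x <= 1.
Variable philip : forall x x', `|phi x - phi x'| <= d x x' / rho.
Variable phiS : forall c, y c != 0 -> phi c = 0.
Variable phifar : forall x c, phi x != 0 -> y c != 0 -> rho <= d c x.
Variable M0 : 0 <= M.
Variable dM : forall x x', d x x' <= M.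

Definition Zf (q v : X -> R) := \sum_(x \in [set: X]) q x * v x.
Definition Gam (q : X -> R) (lam : R) (v : X -> R) : X -> R :=
  fun x => (1 - lam) * (q x * v x / Zf q v) + lam * y x.
Definition nu (v : X -> R) := \sum_(x \in [set: X]) (if phi x == 0 then v x else 0).
Definition Gok (q : X -> R) (lam : R) :=
  [/\ (forall x, 0 <= q x <= 1), (forall x, phi x = 0 -> q x = 1), 0 <= lam <= 1 &
      (lam != 0 -> forall x, q x != 0 -> phi x < 1)].


Lemma cover (u v : X -> R) : fsprob u -> fsprob v ->
  exists s : seq X, [/\ uniq s, (forall x, u x != 0 -> x \in s),
     (forall x, v x != 0 -> x \in s) & (forall x, y x != 0 -> x \in s)].
Proof.
move=> [_ fu _] [_ fv _]; have [_ fy _] := hy.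
have f : finite_set (supp u `|` supp v `|` supp y) by rewrite !finite_setU.
have [s [us hs]] := fin_seq f; exists s; split => // x h; apply: hs.
- by left; left.
- by left; right.
- by right.
Qed.

Lemma sum_seq s (f : X -> R) : uniq s -> (forall x, f x != 0 -> x \in s) ->
  \sum_(x \in [set: X]) f x = \sum_(x <- s) f x.
Proof. exact: fsT_seq. Qed.

Lemma Zf_seq s q v : uniq s -> (forall x, v x != 0 -> x \in s) ->
  Zf q v = \sum_(x <- s) q x * v x.
Proof.
move=> us hs; apply: sum_seq => // x; rewrite mulf_eq0 negb_or => /andP[_]; exact: hs.
Qed.

Lemma nu_seq s v : uniq s -> (forall x, v x != 0 -> x \in s) ->
  nu v = \sum_(x <- s) (if phi x == 0 then v x else 0).
Proof. by move=> us hs; apply: sum_seq => // x; case: ifP => // _; rewrite ?eqxx //; apply: hs. Qed.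

Lemma yphi x : y x != 0 -> phi x = 0. Proof. exact: phiS. Qed.

Lemma qy q x : (forall x, phi x = 0 -> q x = 1) -> q x * y x = y x.
Proof.
move=> hq; have [->|h] := eqVneq (y x) 0; first by rewrite mulr0.
by rewrite hq ?mul1r // yphi.
Qed.

Lemma nu_le_Zf q v : Gok q 0 \/ (exists l, Gok q l) -> fsprob v -> nu v <= Zf q v.
Proof.
move=> hq hv; have [s [us hu _ _]] := cover hv hv.
have [q01 q1] : (forall x, 0 <= q x <= 1) /\ (forall x, phi x = 0 -> q x = 1).
  by case: hq => [[]|[l []]].
have [v0 _ _] := hv.
rewrite (nu_seq us hu) (Zf_seq q us hu); apply: ler_sum_seq => x _.
case: ifP => [/eqP h|_]; first by rewrite q1 ?mul1r.
by apply: mulr_ge0 => //; case/andP: (q01 x).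
Qed.

Lemma Zf_le1 q v : (forall x, 0 <= q x <= 1) -> fsprob v -> Zf q v <= 1.
Proof.
move=> q01 hv; have [s [us hu _ _]] := cover hv hv.
have [v0 _ _] := hv.
rewrite (Zf_seq q us hu) -(fsprob_seq hv us hu); apply: ler_sum_seq => x _.
by rewrite ler_piMl //; case/andP: (q01 x).
Qed.

Lemma Zf_ge0 q v : (forall x, 0 <= q x <= 1) -> fsprob v -> 0 <= Zf q v.
Proof.
move=> q01 [v0 _ _]; apply: fsumr_ge0 => x _; apply: mulr_ge0 => //.
by case/andP: (q01 x).
Qed.

Lemma nu_le1 v : fsprob v -> nu v <= 1.
Proof.
move=> hv; have [s [us hu _ _]] := cover hv hv; have [v0 _ _] := hv.
rewrite (nu_seq us hu) -(fsprob_seq hv us hu); apply: ler_sum_seq => x _.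
by case: ifP.
Qed.

Lemma Zf_y q : (forall x, phi x = 0 -> q x = 1) -> Zf q y = 1.
Proof.
move=> hq; have [s [us hu _ _]] := cover hy hy.
rewrite (Zf_seq q us hu) -(fsprob_seq hy us hu); apply: eq_bigr => x _.
exact: qy.
Qed.

Lemma nu_y : nu y = 1.
Proof.
have [s [us hu _ _]] := cover hy hy.
rewrite (nu_seq us hu) -(fsprob_seq hy us hu); apply: eq_bigr => x _.
case: ifP => // /negbT h; apply/esym/eqP; apply: contraNT h => h.
by rewrite yphi.
Qed.

Lemma Gam_supp q lam v x : Gam q lam v x != 0 -> v x != 0 \/ y x != 0.
Proof.
move=> h; case: (eqVneq (v x) 0) => hv; last by left.
right; apply: contraNT h => /negbNE/eqP hy0.
by rewrite /Gam hv hy0 !mulr0 mul0r mulr0 addr0.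
Qed.

Lemma Gam_fsprob q lam v : Gok q lam -> fsprob v -> 0 < Zf q v -> fsprob (Gam q lam v).
Proof.
move=> [q01 q1 /andP[l0 l1] _] hv Z0; have [v0 fv _] := hv; have [y0 fy _] := hy.
split.
- move=> x; rewrite /Gam; apply: addr_ge0; apply: mulr_ge0; rewrite ?subr_ge0 //.
  apply: divr_ge0 (ltW Z0); apply: mulr_ge0 => //; by case/andP: (q01 x).
- apply: (@sub_finite_set _ _ (supp v `|` supp y)); last by rewrite finite_setU.
  by move=> x /Gam_supp [h|h]; [left|right].
- have [s [us hu _ huy]] := cover hv hv.
  have hs : forall x, Gam q lam v x != 0 -> x \in s.
    by move=> x /Gam_supp [h|h]; [apply: hu|apply: huy].
  rewrite fsupp_T (sum_seq us hs) /Gam big_split /= -!mulr_sumr.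
  rewrite (fsprob_seq hy us huy) -mulr_suml -(Zf_seq q us hu) mulfV ?gt_eqF //.
  by rewrite mulr1 mulr1 subrK.
Qed.

Lemma Gam_viet (W : set (set X)) (A0 : set X) q lam v :
  W A0 -> (forall x, y x != 0 -> A0 x) -> (forall x, phi x < 1 -> A0 x) ->
  Gok q lam -> VietM W v -> 0 < Zf q v -> VietM W (Gam q lam v).
Proof.
move=> WA0 yA pA hq [hv [A [WA hA]]] Z0; split; first exact: Gam_fsprob.
have [q01 q1 _ ql] := hq.
case: (eqVneq lam 0) => l0.
  exists A; split => // x; rewrite /supp /= => h; apply: hA; rewrite /supp /=.
  apply: contraNT h => /negbNE/eqP vx0.
  by rewrite /Gam l0 vx0 mulr0 mul0r mulr0 mul0r addr0.
exists A0; split => // x; rewrite /supp /= => h.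
case: (eqVneq (y x) 0) => yx; last exact: yA.
case: (eqVneq (q x) 0) => qx; last by apply: pA; apply: ql.
by move: h; rewrite /Gam yx qx !(mul0r, mulr0) addr0 eqxx.
Qed.

Lemma nu_Gam q lam v : Gok q lam -> fsprob v -> 0 < Zf q v ->
  nu (Gam q lam v) = (1 - lam) * nu v / Zf q v + lam.
Proof.
move=> [q01 q1 /andP[l0 l1] _] hv Z0.
have [s [us hu _ huy]] := cover hv hv.
have hs : forall x, Gam q lam v x != 0 -> x \in s.
  by move=> x /Gam_supp [h|h]; [apply: hu|apply: huy].
rewrite (nu_seq us hs) (nu_seq us hu).
rewrite (eq_bigr (fun x => (1 - lam) / Zf q v * (if phi x == 0 then v x else 0)
   + lam * y x)); last first.
  move=> x _; rewrite /Gam; case: ifP => [/eqP h|/negbT h].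
    by rewrite q1 // mul1r mulrAC -mulrA.
  have -> : y x = 0 by apply/eqP; apply: contraNT h => /yphi ->.
  by rewrite !mulr0 addr0.
rewrite big_split /= -!mulr_sumr (fsprob_seq hy us huy) mulr1.
by rewrite mulrAC.
Qed.

Lemma nu_Gam_ge q lam v : Gok q lam -> fsprob v -> 0 < Zf q v -> 0 <= nu v ->
  nu v <= nu (Gam q lam v).
Proof.
move=> hq hv Z0 n0; rewrite nu_Gam //.
have [q01 _ /andP[l0 l1] _] := hq.
have Z1 := Zf_le1 q01 hv; have n1 := nu_le1 hv.
have h : nu v <= nu v / Zf q v by rewrite ler_pdivlMr // ler_piMr.
rewrite -mulrA; nra.
Qed.

Lemma Gam_id q v : (forall x, q x = 1) -> fsprob v -> Gam q 0 v = v.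
Proof.
move=> q1 hv; have [s [us hu _ _]] := cover hv hv.
have Z1 : Zf q v = 1.
  by rewrite (Zf_seq q us hu) -(fsprob_seq hv us hu); apply: eq_bigr => x _; rewrite q1 mul1r.
by apply: funext => x; rewrite /Gam Z1 q1 invr1 mulr1 mul1r subr0 mul1r mul0r addr0.
Qed.

Lemma Gam_y q lam : (forall x, phi x = 0 -> q x = 1) -> Gam q lam y = y.
Proof.
move=> q1; apply: funext => x; rewrite /Gam Zf_y // invr1 mulr1 qy //.
by rewrite -mulrDl subrK mul1r.
Qed.

Lemma Gam_1 q v : Gam q 1 v = y.
Proof. by apply: funext => x; rewrite /Gam subrr mul0r add0r mul1r. Qed.

Lemma Gam_comp q lam q' lam' v : Gok q lam -> Gok q' lam' -> fsprob v ->
  0 < nu v ->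
  let Z' := Zf q' (Gam q lam v) in
  Gam q' lam' (Gam q lam v) = Gam (fun x => q' x * q x) (lam' + (1 - lam') * lam / Z') v
  /\ Gok (fun x => q' x * q x) (lam' + (1 - lam') * lam / Z').
Proof.
move=> hq hq' hv n0 Z'.
have [q01 q1 /andP[l0 l1] ql] := hq; have [q01' q1' /andP[l0' l1'] ql'] := hq'.
have [s [us hu _ huy]] := cover hv hv.
have q01'' : forall x, 0 <= q' x * q x <= 1.
  move=> x; have /andP[a b] := q01 x; have /andP[a' b'] := q01' x.
  by rewrite mulr_ge0 //= mulr_ile1.
have q1'' : forall x, phi x = 0 -> q' x * q x = 1 by move=> x h; rewrite q1 // q1' // mulr1.
set Z := Zf q v; set Z2 := Zf (fun x => q' x * q x) v.
have ZZ2 : nu v <= Z2 by apply: nu_le_Zf => //; left; split => //; [rewrite lexx ler01 | rewrite eqxx].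
have ZZ : nu v <= Z by apply: nu_le_Zf => //; right; exists lam.
have Z0 : 0 < Z by apply: lt_le_trans ZZ.
have Z20 : 0 < Z2 by apply: lt_le_trans ZZ2.
have hs : forall x, Gam q lam v x != 0 -> x \in s.
  by move=> x /Gam_supp [h|h]; [apply: hu|apply: huy].
have eZ' : Z' = (1 - lam) * Z2 / Z + lam.
  rewrite /Z' (Zf_seq q' us hs) /Z2 (Zf_seq _ us hu).
  rewrite (eq_bigr (fun x => (1 - lam) / Z * (q' x * q x * v x) + lam * y x)); last first.
    move=> x _; rewrite /Gam -/Z mulrDr [q' x * (lam * _)]mulrCA (qy (q := q')) //.
    by congr (_ + _); ring.
  rewrite big_split /= -!mulr_sumr (fsprob_seq hy us huy) mulr1.
  by rewrite mulrAC.
have Zpos : 0 < (1 - lam) * Z2 / Z + lam.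
  case: (eqVneq lam 0) => [->|ln0]; first by rewrite subr0 mul1r addr0 divr_gt0.
  have : 0 < lam by rewrite lt_neqAle eq_sym ln0.
  have : 0 <= (1 - lam) * Z2 / Z by rewrite divr_ge0 ?mulr_ge0 ?subr_ge0 // ltW.
  lra.
have Z'pos : 0 < Z' by rewrite eZ'.
have lZ : lam / Z' <= 1.
  rewrite ler_pdivrMr // mul1r eZ' lerDr divr_ge0 ?mulr_ge0 ?subr_ge0 //; exact: ltW.
have lZ0 : 0 <= lam / Z' by rewrite divr_ge0 // ltW.
split.
  apply: funext => x; rewrite [LHS]/Gam -/Z' eZ' /Gam -/Z -/Z2 mulrDr [q' x * (lam * _)]mulrCA (qy (q := q')) //.
  have Zn : Z != 0 by rewrite gt_eqF.
  have Z2n : Z2 != 0 by rewrite gt_eqF.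
  have Zpn : (1 - lam) * Z2 / Z + lam != 0 by rewrite gt_eqF.
  field.
  have : 0 < (1 - lam) * Z2 + lam * Z.
    case: (eqVneq lam 0) => [->|ln0]; first by rewrite subr0 mul1r mul0r addr0.
    have : 0 < lam by rewrite lt_neqAle eq_sym ln0.
    have : 0 <= (1 - lam) * Z2 by rewrite mulr_ge0 ?subr_ge0 // ltW.
    move=> h1 h2; apply: (lt_le_trans (mulr_gt0 h2 Z0)); lra.
  by move=> h; rewrite Zn Z2n gt_eqF.
split => //.
- rewrite -mulrA; apply/andP; split.
    by apply: addr_ge0 => //; apply: mulr_ge0; rewrite ?subr_ge0.
  by rewrite -lerBrDl -[X in _ <= X]mulr1; apply: ler_wpM2l; rewrite ?subr_ge0.
- move=> ln x; rewrite mulf_eq0 negb_or => /andP[h1 h2].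
  case: (eqVneq lam' 0) => l'0; last exact: ql'.
  case: (eqVneq lam 0) => l00; last exact: ql.
  by move: ln; rewrite l'0 l00 mulr0 mul0r addr0 eqxx.
Qed.

Lemma sum_delta' (s : seq X) x (F : X -> R) :
  uniq s -> x \in s -> \sum_(x' <- s) (if x' == x then F x' else 0) = F x.
Proof.
move=> us xs; rewrite (bigD1_seq x) //= eqxx big1_seq ?addr0 //.
by move=> i /andP[/negbTE h _]; rewrite h.
Qed.

Lemma scoup_l (s : seq X) (u v : X -> R) (pi : X * X -> R) x : scoup s u v pi -> u x != 0 -> x \in s.
Proof.
move=> [us p0 hs hr _] h; apply: contraNT h => xs.
rewrite -hr big1 // => x' _; apply/eqP; apply: contraNT xs => h.
by have /andP[] := hs _ _ h.
Qed.

Lemma scoup_r (s : seq X) (u v : X -> R) (pi : X * X -> R) x : scoup s u v pi -> v x != 0 -> x \in s.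
Proof.
move=> [us p0 hs _ hc] h; apply: contraNT h => xs.
rewrite -hc big1 // => x' _; apply/eqP; apply: contraNT xs => h.
by have /andP[] := hs _ _ h.
Qed.

Lemma GEN (s : seq X) (u v : X -> R) (pi : X * X -> R) (A B : X -> R) lam lam' :
  scoup s u v pi -> (forall x, y x != 0 -> x \in s) ->
  fsprob (fun x => A x * u x + lam * y x) -> fsprob (fun x => B x * v x + lam' * y x) ->
  (forall x, 0 <= A x <= 2) -> (forall x, 0 <= B x <= 2) ->
  \sum_(x <- s) A x * u x = 1 - lam -> 0 <= lam <= 1 -> 0 <= lam' <= 1 ->
  W1 d (fun x => A x * u x + lam * y x) (fun x => B x * v x + lam' * y x) <=
  2 * scost d s pi + M * (`|lam - lam'| +
     \sum_(x <- s) \sum_(x' <- s) pi (x, x') * `|A x - B x'|).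
Proof.
move=> hs ys hP hQ A02 B02 sA /andP[l0 l1] /andP[l0' l1'].
have [us p0 hsupp hr hc] := hs.
have [y0 _ _] := hy.
pose g (p : X * X) := pi p * Num.min (A p.1) (B p.2) +
   (if p.1 == p.2 then Num.min lam lam' * y p.1 else 0).
have mn0 x x' : 0 <= Num.min (A x) (B x').
  by rewrite le_min; case/andP: (A02 x) => -> _; case/andP: (B02 x') => ->.
have ml0 : 0 <= Num.min lam lam' by rewrite le_min l0 l0'.
have g0 : forall p, 0 <= g p.
  move=> [x x']; rewrite /g /=; apply: addr_ge0; first by apply: mulr_ge0.
  by case: ifP => // _; apply: mulr_ge0.
have hPT := @PT R X d hd s _ _ g M us hP hQ.
have sP : forall x, A x * u x + lam * y x != 0 -> x \in s.
  move=> x; case: (eqVneq (u x) 0) => [->|h]; last by move=> _; apply: scoup_l h.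
  case: (eqVneq (y x) 0) => [->|h]; last by move=> _; apply: ys.
  by rewrite !mulr0 addr0 eqxx.
have sQ : forall x, B x * v x + lam' * y x != 0 -> x \in s.
  move=> x; case: (eqVneq (v x) 0) => [->|h]; last by move=> _; apply: scoup_r h.
  case: (eqVneq (y x) 0) => [->|h]; last by move=> _; apply: ys.
  by rewrite !mulr0 addr0 eqxx.
have rowg : forall x, x \in s -> \sum_(x' <- s) g (x, x') =
    \sum_(x' <- s) pi (x, x') * Num.min (A x) (B x') + Num.min lam lam' * y x.
  by move=> x xs; rewrite /g big_split /= sum_delta.
have colg : forall x', x' \in s -> \sum_(x <- s) g (x, x') =
    \sum_(x <- s) pi (x, x') * Num.min (A x) (B x') + Num.min lam lam' * y x'.
  move=> x' xs; rewrite /g big_split /=; congr (_ + _).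
  rewrite -(sum_delta' (fun x => Num.min lam lam' * y x) us xs).
  apply: eq_bigr => x _; case: (eqVneq x x') => [->|h]; first by rewrite ?eqxx.
  by rewrite ?(negbTE h).
have := hPT sP sQ g0.
move=> H; have {H} := H _ _ dM.
have row : forall x, x \in s -> \sum_(x' <- s) g (x, x') <= A x * u x + lam * y x.
  move=> x xs; rewrite rowg //; apply: lerD; last first.
    by apply: ler_wpM2r => //; rewrite ge_min lexx.
  rewrite -hr mulr_sumr; apply: ler_sum_seq => x' _; rewrite [X in _ <= X]mulrC.
  by apply: ler_wpM2l => //; rewrite ge_min lexx.
have col : forall x', x' \in s -> \sum_(x <- s) g (x, x') <= B x' * v x' + lam' * y x'.
  move=> x' xs; rewrite colg //; apply: lerD; last first.
    by apply: ler_wpM2r => //; rewrite ge_min lexx orbT.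
  rewrite -hc mulr_sumr; apply: ler_sum_seq => x _; rewrite [X in _ <= X]mulrC.
  by apply: ler_wpM2l => //; rewrite ge_min lexx orbT.
move=> /(_ row col) W; apply: (le_trans W); apply: lerD.
  rewrite /scost mulr_sumr; apply: ler_sum_seq => x _; rewrite mulr_sumr.
  apply: ler_sum_seq => x' _; rewrite /g /=.
  case: (eqVneq x x') => [<-|h].
    by rewrite (dxx hd) !mulr0.
  rewrite ?(negbTE h) addr0 mulrA mulrAC.
  have e : 2 * pi (x, x') * d x x' = pi (x, x') * d x x' * 2 by ring.
  rewrite e; apply: ler_wpM2l; first by apply: mulr_ge0 => //; exact: (d0 hd).
  by rewrite ge_min; case/andP: (A02 x) => _ ->.
rewrite mulrC; apply: ler_wpM2l => //.
have Sg : \sum_(x <- s) \sum_(x' <- s) g (x, x') =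
    \sum_(x <- s) \sum_(x' <- s) pi (x, x') * Num.min (A x) (B x') + Num.min lam lam'.
  rewrite (eq_big_seq (fun x => \sum_(x' <- s) pi (x, x') * Num.min (A x) (B x')
     + Num.min lam lam' * y x)); last by move=> x xs; rewrite rowg.
  by rewrite big_split /= -mulr_sumr (fsprob_seq hy us ys) mulr1.
have SA : \sum_(x <- s) \sum_(x' <- s) pi (x, x') * A x = 1 - lam.
  rewrite -sA; apply: eq_bigr => x _; by rewrite -mulr_suml hr mulrC.
have Smin : 1 - lam - \sum_(x <- s) \sum_(x' <- s) pi (x, x') * `|A x - B x'| <=
    \sum_(x <- s) \sum_(x' <- s) pi (x, x') * Num.min (A x) (B x').
  rewrite -SA -sumrB; apply: ler_sum_seq => x _; rewrite -sumrB.
  apply: ler_sum_seq => x' _; rewrite -mulrBr; apply: ler_wpM2l => //.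
  exact: min_ge.
have hl : lam - Num.min lam lam' <= `|lam - lam'|.
  case: (leP lam lam') => h; first by rewrite subrr normr_ge0.
  by rewrite ler_norm.
rewrite Sg; lra.
Qed.

Lemma coupling_seq (u v : X -> R) pi : coupling u v pi ->
  exists s, [/\ scoup s u v pi, (forall x, y x != 0 -> x \in s) &
     cost d pi = scost d s pi].
Proof.
move=> [p0 fpi hr hc]; have [_ fy _] := hy.
have f : finite_set (supp y `|` fst @` supp pi `|` snd @` supp pi).
  by rewrite !finite_setU; split; [split|]; rewrite //; apply: finite_image.
have [s [us hs]] := fin_seq f.
have hs2 : forall x x', pi (x, x') != 0 -> (x \in s) && (x' \in s).
  move=> x x' h; rewrite !hs //; first by right; exists (x, x').
  by left; right; exists (x, x').
exists s; split => //.
- split => // [x|x'].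
    rewrite -hr fsupp_T (fsT_seq us) // => x' h.
    by have /andP[] := hs2 _ _ h.
  rewrite -hc fsupp_T (fsT_seq us) // => x h.
  by have /andP[] := hs2 _ _ h.
- by move=> x h; apply: hs; left; left.
- exact: cost_seq.
Qed.

Lemma scoup_nz (s : seq X) (u v : X -> R) pi x x' : scoup s u v pi ->
  pi (x, x') != 0 -> u x != 0.
Proof.
move=> [us p0 hsupp hr _] h; have /andP[xs x's] := hsupp _ _ h.
rewrite -hr (bigD1_seq x') //=.
have h1 : 0 < pi (x, x') by rewrite lt_neqAle eq_sym h p0.
have h2 : 0 <= \sum_(i <- s | i != x') pi (x, i) by apply: sumr_ge0.
by rewrite gt_eqF //; lra.
Qed.

Lemma clamp01 (t : R) : 0 <= clamp t <= 1.
Proof. by case: (clamp_cases t) => -[h ->]; rewrite ?lexx ?ler01 //; lra. Qed.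

Lemma clamp_lip (a b : R) : `|clamp a - clamp b| <= `|a - b|.
Proof.
have h1 := ler_norm (a - b); have h2 := ler_norm (b - a).
rewrite distrC in h2; rewrite ler_norml.
by case: (clamp_cases a) => -[ha ->]; case: (clamp_cases b) => -[hb ->];
  apply/andP; split; lra.
Qed.

Definition qt (t : R) (x : X) := 1 - clamp (2 * t) * phi x.
Definition lamt (t : R) := clamp (2 * t - 1).
Definition H (t : R) (v : X -> R) := Gam (qt t) (lamt t) v.

Lemma Gok_H t : Gok (qt t) (lamt t).
Proof.
have c1 := clamp01 (2 * t); have c2 := clamp01 (2 * t - 1).
split => //.
- move=> x; have p1 := phi01 x; rewrite /qt.
  have : 0 <= clamp (2 * t) * phi x <= 1.
    by rewrite mulr_ge0 /=; case/andP: c1 => // *; case/andP: p1 => // *; rewrite mulr_ile1.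
  lra.
- by move=> x h; rewrite /qt h mulr0 subr0.
- move=> ln x; rewrite /qt /lamt in ln *.
  have : 0 < 2 * t - 1.
    by move: ln; case: (clamp_cases (2 * t - 1)) => -[h ->]; rewrite ?eqxx //; lra.
  move=> h; have -> : clamp (2 * t) = 1.
    by case: (clamp_cases (2 * t)) => -[h' ->] //; lra.
  have p1 := phi01 x; rewrite mul1r => hp.
  have : phi x != 1 by apply: contra hp => /eqP ->; rewrite subrr.
  by rewrite lt_neqAle => ->; case/andP: p1.
Qed.

Lemma H0 v : fsprob v -> H 0 v = v.
Proof.
move=> hv; rewrite /H /lamt mulr0 add0r.
have -> : clamp (-1 : R) = 0 by case: (clamp_cases (-1 : R)) => -[h ->] //; lra.
apply: Gam_id => // x; rewrite /qt mulr0.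
have -> : clamp (0 : R) = 0 by case: (clamp_cases (0 : R)) => -[h ->] //; lra.
by rewrite mul0r subr0.
Qed.

Lemma H1 v : H 1 v = y.
Proof.
rewrite /H /lamt mulr1.
have -> : clamp (2 - 1 : R) = 1 by case: (clamp_cases (2 - 1 : R)) => -[h ->] //; lra.
exact: Gam_1.
Qed.

Lemma Hy t : H t y = y.
Proof. by apply: Gam_y; case: (Gok_H t). Qed.

Definition ind (x : X) : R := if phi x == 0 then 0 else 1.

Lemma far_mass (s : seq X) v pi : scoup s y v pi -> fsprob v ->
  1 - nu v = \sum_(x <- s) \sum_(x' <- s) pi (x, x') * ind x' /\
  \sum_(x <- s) \sum_(x' <- s) pi (x, x') * ind x' <= scost d s pi / rho.
Proof.
move=> hs hv; have [us p0 hsupp hr hc] := hs.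
have hu : forall x, v x != 0 -> x \in s by move=> x; apply: scoup_r hs.
split.
  rewrite (nu_seq us hu) -(fsprob_seq hv us hu) -sumrB exchange_big.
  apply: eq_bigr => x' _; rewrite -mulr_suml hc /ind.
  by case: ifP => _; rewrite ?mulr0 ?subr0 ?mulr1 ?subrr.
rewrite /scost mulr_suml; apply: ler_sum_seq => x _; rewrite mulr_suml.
apply: ler_sum_seq => x' _; rewrite /ind; case: ifPn => h.
  by rewrite mulr0 divr_ge0 ?mulr_ge0 ?(d0 hd) // ltW.
case: (eqVneq (pi (x, x')) 0) => [->|hp]; first by rewrite !mul0r.
have yx : y x != 0 by apply: scoup_nz hs hp.
rewrite mulr1 -mulrA -[X in X <= _]mulr1; apply: ler_wpM2l => //.
by rewrite ler_pdivlMr // mul1r; apply: phifar.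
Qed.

Lemma E1a (v : X -> R) pi : fsprob v -> coupling y v pi -> 1 - nu v <= cost d pi / rho.
Proof.
move=> hv cp; have [s [hs ys ->]] := coupling_seq cp.
by have [-> h] := far_mass hs hv.
Qed.

Lemma E1b (v : X -> R) pi q lam : fsprob v -> Gok q lam -> 1/2 <= nu v ->
  coupling y v pi -> W1 d y (Gam q lam v) <= 2 * cost d pi + M * (3 * (cost d pi / rho)).
Proof.
move=> hv hq n2 cp; have [s [hs ys ->]] := coupling_seq cp.
have [us p0 hsupp hr hc] := hs.
have [q01 q1 /andP[l0 l1] _] := hq.
have [far1 far2] := far_mass hs hv.
set Z := Zf q v.
have ZZ : nu v <= Z by apply: nu_le_Zf => //; right; exists lam.
have Z1 : Z <= 1 by apply: Zf_le1.
have Z0 : 0 < Z by apply: lt_le_trans ZZ; apply: lt_le_trans n2; rewrite divr_gt0.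
pose A x := (1 - lam) * q x.
pose B x := (1 - lam) * q x / Z.
have eP : y = fun x => A x * y x + lam * y x.
  by apply: funext => x; rewrite /A -mulrA qy // -mulrDl subrK mul1r.
have eQ : Gam q lam v = fun x => B x * v x + lam * y x.
  by apply: funext => x; rewrite /Gam /B; congr (_ + _); ring.
have iZ : 1 <= Z^-1 by rewrite -div1r ler_pdivlMr // mul1r.
have iZ2 : Z^-1 - 1 <= 2 * (1 - nu v).
  have i2 : Z^-1 <= 2 by rewrite -div1r ler_pdivrMr //; lra.
  have -> : Z^-1 - 1 = (1 - Z) * Z^-1 by field; rewrite gt_eqF.
  rewrite mulrC; apply: (le_trans (_ : _ <= 2 * (1 - Z))); last lra.
  by apply: ler_wpM2r => //; rewrite subr_ge0.
rewrite [in X in W1 d X _]eP eQ.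
apply: (le_trans (GEN hs ys _ _ _ _ _ _ _)).
- rewrite -eP; exact: hy.
- rewrite -eQ; apply: Gam_fsprob => //.
- move=> x; rewrite /A; have /andP[a b] := q01 x.
  rewrite mulr_ge0 ?subr_ge0 //=; apply: (le_trans (_ : _ <= 1)); last lra.
  by rewrite mulr_ile1 ?subr_ge0 // lerBlDr lerDl.
- move=> x; rewrite /B; have /andP[a b] := q01 x.
  rewrite divr_ge0 ?mulr_ge0 ?subr_ge0 ?(ltW Z0) //=.
  rewrite ler_pdivrMr //; apply: (le_trans (_ : _ <= 1)); last lra.
  by rewrite mulr_ile1 ?subr_ge0 // lerBlDr lerDl.
  rewrite (eq_bigr (fun x => (1 - lam) * y x)); last by move=> x _; rewrite /A -mulrA qy.
  by rewrite -mulr_sumr (fsprob_seq hy us ys) mulr1.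
- by rewrite l0.
- by rewrite l0.
rewrite subrr normr0 add0r lerD2l; apply: ler_wpM2l => //.
apply: (@le_trans _ _ (\sum_(x <- s) \sum_(x' <- s) pi (x, x') * (ind x' + (Z^-1 - 1)))).
  apply: ler_sum_seq => x _; apply: ler_sum_seq => x' _.
  case: (eqVneq (pi (x, x')) 0) => [->|hp]; first by rewrite !mul0r.
  apply: ler_wpM2l => //.
  have yx : y x != 0 by apply: scoup_nz hs hp.
  rewrite /A /B (q1 x (yphi yx)) mulr1.
  have /andP[a b] := q01 x'.
  have e : (1 - lam) - (1 - lam) * q x' / Z = (1 - lam) * ((1 - q x') + q x' * (1 - Z^-1)).
    by ring.
  rewrite e normrM ger0_norm ?subr_ge0 //.
  apply: (le_trans (_ : _ <= 1 * `|1 - q x' + q x' * (1 - Z^-1)|)).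
    by apply: ler_wpM2r => //; lra.
  rewrite mul1r; apply: (le_trans (ler_normD _ _)); apply: lerD.
    rewrite /ind; case: ifPn => [/eqP h|_]; first by rewrite q1 // subrr normr0.
    by rewrite ger0_norm; lra.
  rewrite normrM ger0_norm // ler0_norm; last lra.
  rewrite opprB -[X in _ <= X]mul1r; apply: ler_wpM2r; lra.
rewrite (eq_bigr (fun x => \sum_(x' <- s) pi (x, x') * ind x' +
   (Z^-1 - 1) * \sum_(x' <- s) pi (x, x'))); last first.
  move=> x _; rewrite mulr_sumr -big_split /=; apply: eq_bigr => x' _; ring.
have Spi : \sum_(x <- s) \sum_(x' <- s) pi (x, x') = 1.
  by rewrite (eq_bigr y) ?(fsprob_seq hy us ys) // => x _; exact: hr.
rewrite big_split /= -mulr_sumr Spi mulr1.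
have hn := nu_le1 hv.
move: far2; rewrite -far1 => h; lra.
Qed.

Lemma prod01 (a b : R) : 0 <= a <= 1 -> 0 <= b <= 1 -> 0 <= a * b <= 1.
Proof. by move=> /andP[a0 a1] /andP[b0 b1]; rewrite mulr_ge0 //= mulr_ile1. Qed.

Lemma lam01 (l : R) : 0 <= l -> l <= 1 -> 0 <= 1 - l <= 1.
Proof. by move=> *; apply/andP; split; lra. Qed.

Lemma lam01' (l : R) : 0 <= l -> l <= 1 -> 0 <= l <= 1.
Proof. by move=> -> ->. Qed.

Lemma alg1 (a b Z Z' : R) : 0 <= b <= 1 -> 1/2 <= Z -> 1/2 <= Z' ->
  `|a / Z - b / Z'| <= 2 * `|a - b| + 4 * `|Z - Z'|.
Proof.
move=> /andP[b0 b1] hZ hZ'.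
have Z0 : 0 < Z by apply: lt_le_trans hZ; rewrite divr_gt0.
have Z'0 : 0 < Z' by apply: lt_le_trans hZ'; rewrite divr_gt0.
have iZ : Z^-1 <= 2 by rewrite -div1r ler_pdivrMr //; lra.
have iZ' : Z'^-1 <= 2 by rewrite -div1r ler_pdivrMr //; lra.
have e : a / Z - b / Z' = (a - b) * Z^-1 + b * (Z' - Z) * (Z^-1 * Z'^-1).
  by field; rewrite !gt_eqF.
rewrite e; apply: (le_trans (ler_normD _ _)); apply: lerD.
  rewrite normrM; have -> : `|Z^-1| = Z^-1 by rewrite gtr0_norm // invr_gt0.
  by rewrite mulrC; apply: ler_wpM2r.
rewrite normrM; have -> : `|Z^-1 * Z'^-1| = Z^-1 * Z'^-1 by rewrite gtr0_norm // mulr_gt0 // invr_gt0.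
rewrite !normrM (ger0_norm b0) (distrC Z').
have hP : Z^-1 * Z'^-1 <= 2 * 2.
  by apply: ler_pM => //; rewrite invr_ge0 ltW.
have hw : b * `|Z - Z'| <= `|Z - Z'| by rewrite ler_piMl.
rewrite mulrC; apply: (le_trans (ler_pM _ _ hP hw)).
- by rewrite mulr_ge0 // invr_ge0 ltW.
- by rewrite mulr_ge0.
lra.
Qed.

Lemma alg2 (l l' q q' : R) : 0 <= l <= 1 -> 0 <= q' <= 1 ->
  `|(1 - l) * q - (1 - l') * q'| <= `|l - l'| + `|q - q'|.
Proof.
move=> /andP[l0 l1] /andP[q0 q1].
have e : (1 - l) * q - (1 - l') * q' = (1 - l) * (q - q') + (l' - l) * q' by ring.
rewrite e addrC; apply: (le_trans (ler_normD _ _)); apply: lerD.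
  rewrite normrM (ger0_norm q0) distrC -[X in _ <= X]mulr1; apply: ler_wpM2l => //.
rewrite normrM ger0_norm ?subr_ge0 // -[X in _ <= X]mul1r; apply: ler_wpM2r => //.
lra.
Qed.

Lemma qt_lip t t' x x' : `|qt t x - qt t' x'| <= 2 * `|t - t'| + d x x' / rho.
Proof.
rewrite /qt; set c := clamp (2 * t); set c' := clamp (2 * t').
have e : 1 - c * phi x - (1 - c' * phi x') = (c' - c) * phi x' + c * (phi x' - phi x) by ring.
have /andP[p0 p1] := phi01 x'; have /andP[c0 c1] := clamp01 (2 * t).
rewrite e; apply: (le_trans (ler_normD _ _)); apply: lerD.
  rewrite normrM (ger0_norm p0); apply: (le_trans (_ : _ <= `|c' - c| * 1)).
    by apply: ler_wpM2l.
  rewrite mulr1 /c /c'; apply: (le_trans (clamp_lip _ _)).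
  have -> : 2 * t' - 2 * t = 2 * (t' - t) by ring.
  by rewrite normrM ger0_norm // distrC.
rewrite normrM (ger0_norm c0) distrC; apply: (le_trans (_ : _ <= 1 * `|phi x - phi x'|)).
  by apply: ler_wpM2r.
by rewrite mul1r philip.
Qed.

Lemma E2 (u v : X -> R) pi t t' : fsprob u -> fsprob v -> 1/2 <= nu u -> 1/2 <= nu v ->
  coupling u v pi ->
  W1 d (H t u) (H t' v) <= 2 * cost d pi + M * (18 * `|t - t'| + 6 * (cost d pi / rho)).
Proof.
move=> hu hv nu2 nv2 cp; have [s [hs ys ->]] := coupling_seq cp.
have [us p0 hsupp hr hc] := hs.
have cu : forall x, u x != 0 -> x \in s by move=> x; apply: scoup_l hs.
have cv : forall x, v x != 0 -> x \in s by move=> x; apply: scoup_r hs.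
have Spi : \sum_(x <- s) \sum_(x' <- s) pi (x, x') = 1.
  by rewrite (eq_bigr u) ?(fsprob_seq hu us cu) // => x _; exact: hr.
have hq := Gok_H t; have hq' := Gok_H t'.
have [q01 q1 /andP[l0 l1] _] := hq; have [q01' q1' /andP[l0' l1'] _] := hq'.
set Zu := Zf (qt t) u; set Zv := Zf (qt t') v.
set lu := lamt t; set lv := lamt t'.
have ZZu : 1/2 <= Zu.
  by apply: (le_trans nu2); apply: nu_le_Zf => //; right; exists lu.
have ZZv : 1/2 <= Zv.
  by apply: (le_trans nv2); apply: nu_le_Zf => //; right; exists lv.
have Zu0 : 0 < Zu by apply: lt_le_trans ZZu; rewrite divr_gt0.
have Zv0 : 0 < Zv by apply: lt_le_trans ZZv; rewrite divr_gt0.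
have iZu : Zu^-1 <= 2 by rewrite -div1r ler_pdivrMr //; lra.
have iZv : Zv^-1 <= 2 by rewrite -div1r ler_pdivrMr //; lra.
pose A x := (1 - lu) * qt t x / Zu.
pose B x := (1 - lv) * qt t' x / Zv.
have eP : H t u = fun x => A x * u x + lu * y x.
  by apply: funext => x; rewrite /H /Gam /A -/Zu -/lu; congr (_ + _); ring.
have eQ : H t' v = fun x => B x * v x + lv * y x.
  by apply: funext => x; rewrite /H /Gam /B -/Zv -/lv; congr (_ + _); ring.
have A02 : forall x, 0 <= A x <= 2.
  move=> x; have /andP[a b] := prod01 (lam01 l0 l1) (q01 x).
  rewrite /A divr_ge0 ?(ltW Zu0) //= -[X in _ <= X]mul1r.
  by apply: ler_pM => //; rewrite invr_ge0 ltW.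
have B02 : forall x, 0 <= B x <= 2.
  move=> x; have /andP[a b] := prod01 (lam01 l0' l1') (q01' x).
  rewrite /B divr_ge0 ?(ltW Zv0) //= -[X in _ <= X]mul1r.
  by apply: ler_pM => //; rewrite invr_ge0 ltW.
have ZuE : Zu = \sum_(x <- s) \sum_(x' <- s) pi (x, x') * qt t x.
  rewrite /Zu (Zf_seq _ us cu); apply: eq_bigr => x _.
  by rewrite -hr mulr_sumr; apply: eq_bigr => x' _; rewrite mulrC.
have ZvE : Zv = \sum_(x <- s) \sum_(x' <- s) pi (x, x') * qt t' x'.
  rewrite /Zv (Zf_seq _ us cv) exchange_big; apply: eq_bigr => x' _.
  by rewrite -hc mulr_sumr; apply: eq_bigr => x _; rewrite mulrC.
have hZ : `|Zu - Zv| <= 2 * `|t - t'| + scost d s pi / rho.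
  rewrite ZuE ZvE -sumrB; apply: (le_trans (ler_norm_sum _ _ _)).
  apply: (@le_trans _ _ (\sum_(x <- s) \sum_(x' <- s)
     (pi (x, x') * (2 * `|t - t'|) + pi (x, x') * d x x' / rho))).
    apply: ler_sum_seq => x _; rewrite -sumrB; apply: (le_trans (ler_norm_sum _ _ _)).
    apply: ler_sum_seq => x' _; rewrite -mulrBr normrM (ger0_norm (p0 _)) -mulrA -mulrDr.
    by apply: ler_wpM2l => //; apply: qt_lip.
  rewrite (eq_bigr (fun x => (\sum_(x' <- s) pi (x, x')) * (2 * `|t - t'|) +
      (\sum_(x' <- s) pi (x, x') * d x x') / rho)); last first.
    by move=> x _; rewrite big_split /= mulr_suml mulr_suml.
  by rewrite big_split /= -mulr_suml Spi mul1r -mulr_suml.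
have hl : `|lu - lv| <= 2 * `|t - t'|.
  rewrite /lu /lv /lamt; apply: (le_trans (clamp_lip _ _)).
  have -> : 2 * t - 1 - (2 * t' - 1) = 2 * (t - t') by ring.
  by rewrite normrM ger0_norm.
rewrite eP eQ; apply: (le_trans (GEN hs ys _ _ A02 B02 _ _ _)).
- rewrite -eP; apply: Gam_fsprob => //; lra.
- rewrite -eQ; apply: Gam_fsprob => //; lra.
- rewrite (eq_bigr (fun x => (1 - lu) / Zu * (qt t x * u x))); last first.
    by move=> x _; rewrite /A; ring.
  by rewrite -mulr_sumr -(Zf_seq _ us cu) -/Zu mulrAC -mulrA mulfV ?gt_eqF // mulr1.
- by rewrite l0.
- by rewrite l0'.
rewrite lerD2l; apply: ler_wpM2l => //.
apply: (@le_trans _ _ (2 * `|t - t'| + \sum_(x <- s) \sum_(x' <- s)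
   pi (x, x') * ((16 * `|t - t'| + 4 * (scost d s pi / rho)) + 2 * (d x x' / rho)))).
  apply: lerD => //; apply: ler_sum_seq => x _; apply: ler_sum_seq => x' _.
  apply: ler_wpM2l => //.
  have h1 := alg1 ((1 - lu) * qt t x) (prod01 (lam01 l0' l1') (q01' x')) ZZu ZZv.
  have h2 := alg2 lv (qt t x) (lam01' l0 l1) (q01' x').
  have h3 := qt_lip t t' x x'.
  rewrite /A /B; lra.
set K := 16 * `|t - t'| + 4 * (scost d s pi / rho).
have eK : K = 16 * `|t - t'| + 4 * (scost d s pi / rho) by [].
clearbody K.
have E : \sum_(x <- s) \sum_(x' <- s) pi (x, x') * (K + 2 * (d x x' / rho)) =
  K * \sum_(x <- s) \sum_(x' <- s) pi (x, x') +
  2 / rho * \sum_(x <- s) \sum_(x' <- s) pi (x, x') * d x x'.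
  rewrite !mulr_sumr -big_split /=; apply: eq_bigr => x _.
  rewrite !mulr_sumr -big_split /=; apply: eq_bigr => x' _; ring.
rewrite E Spi -/(scost d s pi) mulr1.
have -> : 2 / rho * scost d s pi = 2 * (scost d s pi / rho) by ring.
lra.
Qed.

Lemma main_local (W : set (set X)) (A0 : set X) (N : set (X -> R)) (eN : R) :
  W A0 -> (forall x, y x != 0 -> A0 x) -> (forall x, phi x < 1 -> A0 x) ->
  VietM W y -> N `<=` VietM W -> N y -> 0 < eN ->
  (forall v, VietM W v -> W1 d y v < eN -> N v) ->
  exists U, [/\ nbhd_in (VietM W) (W1 d) y U, U `<=` N & sdr_onto_point (W1 d) U y].
Proof.
move=> WA0 yA phiA Yy NY Ny eN0 hN.
pose U := [set v | VietM W v /\ 1/2 < nu v /\ forall q lam, Gok q lam -> N (Gam q lam v)].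
have h2 : (0 : R) < 1/2 by rewrite divr_gt0.
have Zpos : forall q lam v, Gok q lam -> fsprob v -> 1/2 < nu v -> 0 < Zf q v.
  move=> q lam v hq hv hn; apply: (lt_le_trans h2); apply: (le_trans (ltW hn)).
  by apply: nu_le_Zf => //; right; exists lam.
exists U; split.
- split.
  + by move=> v [].
  + split => //; split; first by rewrite nu_y; lra.
    by move=> q lam [_ q1 _ _]; rewrite Gam_y.
  + pose K := 2 + 3 * (M / rho).
    have K0 : 0 < K.
      have : 0 <= M / rho by apply: divr_ge0 => //; exact: ltW.
      rewrite /K; lra.
    exists (Num.min (rho / 2) (eN / K)).
      by rewrite lt_min !divr_gt0.
    move=> v Yv; have [hv _] := Yv; have [hy' _] := Yy.
    move=> /(W1_lt hy' hv) [pi [cp cpi]]; move: cpi; rewrite lt_min => /andP[c1 c2].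
    have cost0 : 0 <= cost d pi by apply: (cost_ge0 hd); case: cp.
    have hn : 1/2 < nu v.
      have := E1a hv cp; have : cost d pi / rho < 1 / 2.
        by rewrite ltr_pdivrMr // mulrC mul1r.
      lra.
    split => //; split => // q lam hq; apply: hN.
      apply: (Gam_viet WA0 yA phiA hq Yv); exact: (Zpos q lam v hq hv hn).
    apply: (le_lt_trans (E1b hv hq (ltW hn) cp)).
    have -> : 2 * cost d pi + M * (3 * (cost d pi / rho)) = cost d pi * K.
      by rewrite /K; field; rewrite gt_eqF.
    by rewrite -ltr_pdivlMr.
- move=> v [Yv [hn hU]]; have [hv _] := Yv.
  have e := Gam_id (q := fun=> 1) (fun=> erefl) hv.
  rewrite -e; apply: hU; split => //.
  + by move=> x; rewrite lexx ler01.
  + by rewrite lexx ler01.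
  + by rewrite eqxx.
exists H; split.
- move=> t u /andP[t0 t1] [Yu [hn hU]]; have [hu _] := Yu.
  have hn0 : 0 < nu u by apply: lt_trans hn.
  split; first exact: NY (hU _ _ (Gok_H t)).
  split.
    apply: (lt_le_trans hn); apply: nu_Gam_ge => //; first exact: Gok_H.
      exact: (Zpos _ _ _ (Gok_H t) hu hn).
    exact: ltW.
  move=> q lam hq; have [e g] := Gam_comp (Gok_H t) hq hu hn0.
  by rewrite /H e; apply: hU.
- by move=> u [[hu _] _]; apply: H0.
- by move=> u _; apply: H1.
- by move=> t _; apply: Hy.
move=> t u _ [[hu _] [hnu _]] e e0.
pose K2 := 2 + 18 * M + 6 * (M / rho).
have Mr : 0 <= M / rho by apply: divr_ge0 => //; exact: ltW.
have K20 : 0 < K2 by rewrite /K2; move: Mr M0; set mr := M / rho; lra.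
exists (e / K2); first by rewrite divr_gt0.
move=> s' v /andP[s0 s1] [[hv _] [hnv _]] hts huv.
have [pi [cp cpi]] := W1_lt hu hv huv.
have cost0 : 0 <= cost d pi by apply: (cost_ge0 hd); case: cp.
apply: (le_lt_trans (E2 t s' hu hv (ltW hnu) (ltW hnv) cp)).
have -> : 2 * cost d pi + M * (18 * `|t - s'| + 6 * (cost d pi / rho)) =
  2 * cost d pi + 18 * (M * `|t - s'|) + 6 * (M / rho * cost d pi) by ring.
set del := e / K2 in hts cpi *.
have eK : e = 2 * del + 18 * (M * del) + 6 * (M / rho * del).
  have -> : 2 * del + 18 * (M * del) + 6 * (M / rho * del) = del * K2 by rewrite /K2; ring.
  by rewrite /del divfK // gt_eqF.
have k1 : M * `|t - s'| <= M * del by apply: ler_wpM2l => //; rewrite distrC ltW.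
have k2 : M / rho * cost d pi <= M / rho * del by apply: ler_wpM2l => //; exact: ltW.
rewrite eK; lra.
Qed.

End Main.

Unset Implicit Arguments.

Theorem theorem4p10 (R : realType) (X : choiceType) (d : X -> X -> R)
    (W : set (set X)) :
  is_metric d -> mcompact d ->
  (forall A, W A -> mopen d A) -> (forall x, exists A, W A /\ A x) ->
  unif_bounded d W ->
  strictly_strongly_locally_contractible (VietM W) (W1 d).
Proof.
move=> hd hc hW hcov hub y Yy N [NY Ny [eN eN0 hN]].
have [hy [A0 [WA0 yA0]]] := Yy.
have [M1 dM1] := bound_d hd hc.
have [_ fS _] := hy.
have [phi [rho [rho0 [phi01 philip phiS phifar phiA]]]] :=
  phi_exists hd fS (hW A0 WA0) yA0.
apply: (@main_local R X d hd y phi rho (Num.max M1 0) hy rho0 phi01 philip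
   phiS phifar _ _ W A0 N eN WA0 _ phiA Yy NY Ny eN0 hN).
- by rewrite le_max lexx orbT.
- by move=> x x'; rewrite le_max dM1.
- by move=> x h; apply: yA0.
Qed.
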